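(* Let $n>1$ and $P(x)=a_nx^n+a_{n-1}x^{n-1}+\cdots+a_1x$ with integer coefficients $a_i\ge 0$, $a_n\neq 0$, and $\gcd(a_n,\dots,a_1)=1$. Let $(a,b)\in\mathbb{N}^2$. If $\gcd_P(a,b)=1$, then $(a,b)$ is $\mathcal{F}(a_n,\dots,a_1)$-visible.
   Context: $\mathbb{N}$ denotes the positive integers. For $(a,b)\in\mathbb{N}^2$, $\gcd_P(a,b)=\max\{d\in\mathbb{N}: d\mid P(a),\ d\mid b\}$. The family $\mathcal{F}(a_n,\dots,a_1)=\{y=q(a_nx^n+\cdots+a_1x): q\in\mathbb{Q}^+\}$. A point $(r,s)\in\mathbb{N}^2$ is $\mathcal{F}(a_n,\dots,a_1)$-visible if there is $q\in\mathbb{Q}^+$ with $s=q(a_nr^n+\cdots+a_1r)$ and no other point of $\mathbb{N}^2$ lies on the curve $y=q(a_nx^n+\cdots+a_1x)$ between the origin and $(r,s)$. *)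

(* Defs.v *)
From mathcomp Require Import all_boot all_order all_algebra.
Set Implicit Arguments. Unset Strict Implicit. Unset Printing Implicit Defensive.
Import Order.TTheory GRing.Theory Num.Theory.

Definition polP (n : nat) (a : nat -> nat) (x : nat) : nat :=
  \sum_(1 <= i < n.+1) a i * x ^ i.

Definition coef_gcd (n : nat) (a : nat -> nat) : nat :=
  \big[gcdn/0]_(1 <= i < n.+1) a i.

(* gcd_P(a,b) = max { d : d | P(a), d | b } = gcd (P a) b  (b > 0) *)
Definition gcdP (n : nat) (a : nat -> nat) (x y : nat) : nat :=
  gcdn (polP n a x) y.

(* (r,s) in N^2 (positive integers) lies on y = q P(x) for some positive rational q,
   and no other point of N^2 on that curve lies between the origin and (r,s). *)
Definition F_visible (n : nat) (a : nat -> nat) (r s : nat) : Prop :=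
  exists q : rat, (0 < q)%R /\ (s%:R = q * (polP n a r)%:R)%R /\
    forall x y : nat, 0 < x -> 0 < y -> x < r ->
      (y%:R <> q * (polP n a x)%:R :> rat)%R.

(* Main.v *)
Require Import Defs.
From mathcomp Require Import all_boot all_order all_algebra.
Import Order.TTheory GRing.Theory Num.Theory.

Lemma polP_split n a x : 0 < n ->
  polP n a x = \sum_(1 <= i < n) a i * x ^ i + a n * x ^ n.
Proof. by move=> n0; rewrite /polP big_nat_recr. Qed.

Lemma polP_pos n a x : 0 < n -> a n != 0 -> 0 < x -> 0 < polP n a x.
Proof.
move=> n0 an x0; rewrite polP_split //.
apply: (leq_trans _ (leq_addl _ _)).
by rewrite muln_gt0 lt0n an expn_gt0 x0.
Qed.

Lemma polP_lt n a x r : 0 < n -> a n != 0 -> x < r ->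
  polP n a x < polP n a r.
Proof.
move=> n0 an xr; rewrite !polP_split //.
apply: (@leq_ltn_trans (\sum_(1 <= i < n) a i * r ^ i + a n * x ^ n)).
  rewrite leq_add2r; apply: leq_sum => i _; apply: leq_mul => //.
  by case: i => [|i] //; rewrite leq_exp2r // ltnW.
by rewrite ltn_add2l ltn_pmul2l ?lt0n // ltn_exp2r.
Qed.

Theorem lemma3p2 (n : nat) (a : nat -> nat) (r s : nat) :
  1 < n -> a n != 0 -> coef_gcd n a = 1 ->
  0 < r -> 0 < s ->
  gcdP n a r s = 1 ->
  F_visible n a r s.
Proof.
move=> n1 an _ r0 s0 g.
have n0 : 0 < n by apply: ltnW.
have Pr0 := @polP_pos n a r n0 an r0.
have Pr0' : ((polP n a r)%:R != 0 :> rat)%R by rewrite pnatr_eq0 -lt0n.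
exists ((s%:R / (polP n a r)%:R)%R); split; [|split].
- by rewrite divr_gt0 // ltr0n.
- by rewrite mulfVK.
move=> x y x0 y0 xr E.
have E2 : (y * polP n a r = s * polP n a x)%N.
  apply/eqP; rewrite -(eqr_nat rat) !natrM E.
  by rewrite mulrAC mulfVK // eqxx.
have : polP n a r %| polP n a x.
  rewrite -(@Gauss_dvdr _ s); last by rewrite /coprime -/(gcdP n a r s) g.
  by rewrite -E2 dvdn_mull.
move/(dvdn_leq (@polP_pos n a x n0 an x0)).
by rewrite leqNgt polP_lt.
Qed.
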